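(* Assume $M_h=\mathbb{P}_1$ (so $\Phi_h=M_h$). Then any solution $(\phi^{n+1},\mu^{n+1})\in\Phi_h\times M_h$ of the J$_\varepsilon$-scheme satisfies $$\delta_t\Big(\int_\Omega I_h(J_\varepsilon(\phi^{n+1}))\,d\boldsymbol x\Big)\le\int_\Omega M^J_\varepsilon(\phi^{n+1})|\nabla\mu^{n+1}|^2\,d\boldsymbol x+\int_\Omega|\nabla\phi^{n+1}|^2\,d\boldsymbol x,$$ where $M^J_\varepsilon(\phi^{n+1})|\nabla\mu^{n+1}|^2$ means $(M^J_\varepsilon(\phi^{n+1})\nabla\mu^{n+1})\cdot\nabla\mu^{n+1}$. Moreover, $$\int_\Omega I_h(J_\varepsilon(\phi^{n+1}))\,d\boldsymbol x\le C_1+C_2\,T,$$ where $C_1,C_2$ depend on the initial energy $E(\phi^0)$ and on $\int_\Omega I_h(J_\varepsilon(\phi^0))\,d\boldsymbol x$.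
   Context: $\Omega\subset\mathbb{R}^d$ ($d=1,2,3$) bounded, $\eta>0$, $\varepsilon\in(0,1/2)$. $F(\phi)=\frac1{4\eta^2}\phi^2(\phi-1)^2=F_c+F_e$ with $F_c(\phi)=\frac1{4\eta^2}(\phi^4-2\phi^3+\frac32\phi^2)$, $F_e(\phi)=-\frac1{8\eta^2}\phi^2$; $E(\phi)=\int_\Omega(\frac12|\nabla\phi|^2+F(\phi))d\boldsymbol x$. The interval $[0,T]$ is split into $N$ steps, $\Delta t=T/N$, $\delta_tf^{n+1}=(f^{n+1}-f^n)/\Delta t$, $n=0,\dots,N-1$. $\mathcal T_h$ is a structured triangulation of $\Omega$ in which every element $I$ has vertices $\boldsymbol x_0,\dots,\boldsymbol x_d$ with $\boldsymbol x_k-\boldsymbol x_0$ parallel to the $k$-th coordinate axis. $\Phi_h$ is the space of continuous piecewise $\mathbb{P}_1$ functions, $M_h$ the space of continuous piecewise $\mathbb{P}_k$ functions. $I_h$ is nodal $\mathbb{P}_1$ interpolation, $(f,g)_h=\int_\Omega I_h(fg)\,d\boldsymbol x$, $(\cdot,\cdot)$ the $L^2$ product. $J(\phi)=(1-2\phi)\arcsin(\sqrt{1-\phi})+\sqrt{(1-\phi)\phi}+2\arcsin(\sqrt{1/2})\,\phi$ on $[0,1]$ (so $J''(\phi)=1/\sqrt{\phi(1-\phi)}$); $J_\varepsilon\in C^2(\mathbb{R})$ equals $J$ on $[\varepsilon,1-\varepsilon]$ and its second-order Taylor polynomial at $\varepsilon$ (resp. $1-\varepsilon$) for $\phi<\varepsilon$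 (resp. $\phi>1-\varepsilon$). For $\phi\in\Phi_h$, $M^J_\varepsilon(\phi)$ is the piecewise constant diagonal matrix whose $k$-th entry on $I$ is $\Big(\frac{\phi(\boldsymbol x_k)-\phi(\boldsymbol x_0)}{J_\varepsilon'(\phi(\boldsymbol x_k))-J_\varepsilon'(\phi(\boldsymbol x_0))}\Big)^2$ if $\phi(\boldsymbol x_k)\neq\phi(\boldsymbol x_0)$ and $\big(1/J_\varepsilon''(\phi(\boldsymbol x_0))\big)^2$ otherwise. J$_\varepsilon$-scheme: given $\phi^n\in\Phi_h$ (starting from $\phi^0\in\Phi_h$), find $(\phi^{n+1},\mu^{n+1})\in\Phi_h\times M_h$ such that for all $(\bar\phi,\bar\mu)\in\Phi_h\times M_h$: $\frac1{\Delta t}(\phi^{n+1}-\phi^n,\bar\mu)_h+(M^J_\varepsilon(\phi^{n+1})\nabla\mu^{n+1},\nabla\bar\mu)=0$ and $(\nabla\phi^{n+1},\nabla\bar\phi)+(F_c'(\phi^{n+1})+F_e'(\phi^n),\bar\phi)=(\mu^{n+1},\bar\phi)_h$. *)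

(* Defs.v *)
From HB Require Import structures.
From mathcomp Require Import all_boot all_order all_algebra.
From mathcomp Require Import all_classical all_reals all_analysis.
Set Implicit Arguments.
Unset Strict Implicit.
Unset Printing Implicit Defensive.
Import Order.TTheory GRing.Theory Num.Theory.
Import numFieldNormedType.Exports.
Local Open Scope classical_set_scope.
Local Open Scope ring_scope.

(* ---------- integral over the reference simplex ---------------------------
   S_d = { p in R^d | p_i >= 0, sum_i p_i <= 1 }, points encoded as nat -> R
   (only the coordinates 0..d-1 matter).  Lebesgue integral, computed by the
   iterated form  S_{d+1} = {(t, (1-t) y) | t in [0,1], y in S_d},
   Jacobian (1-t)^d. *)
Fixpoint refint {R : realType} (d : nat) (g : (nat -> R) -> R) : R :=
  match d with
  | 0 => g (fun _ => 0)
  | d'.+1 =>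
      Rintegral (@lebesgue_measure R) `[0%R, 1%R]
        (fun t => (1 - t) ^+ d' *
           refint d' (fun y => g (fun i => if i is i'.+1 then (1 - t) * y i' else t)))
  end.

(* A continuous piecewise P1
   function is given by its nodal values f : V -> R. *)
Section Mesh.
Variables (R : realType) (d : nat) (V K : finType).
Variable X : V -> 'I_d -> R.
Variable vtx : K -> 'I_d.+1 -> V.

Definition v0 (e : K) : V := vtx e ord0.
Definition vk (e : K) (k : 'I_d) : V := vtx e (lift ord0 k).

Definition structured : Prop :=
  forall (e : K) (k j : 'I_d), (X (vk e k) j == X (v0 e) j) = (j != k).

(* x_k - x_0 = hlen e k * (k-th unit vector) *)
Definition hlen (e : K) (k : 'I_d) : R := X (vk e k) k - X (v0 e) k.

(* |det| of the affine map from the reference simplex onto element e *)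
Definition jac (e : K) : R := \prod_(k < d) `|hlen e k|.

(* value of the P1 function (nodal values f) on element e at the point
   x = x_0 + sum_k p_k (x_k - x_0), p in the reference simplex;
   for f = g evaluated at the nodes this is the nodal interpolant I_h g *)
Definition loc (f : V -> R) (e : K) (p : nat -> R) : R :=
  f (v0 e) + \sum_(k < d) p k * (f (vk e k) - f (v0 e)).

(* integral over Omega (= union of the elements) of a function given, on each
   element e, in reference coordinates *)
Definition intOmega (g : K -> (nat -> R) -> R) : R :=
  \sum_(e : K) jac e * refint d (g e).

Definition grad (f : V -> R) (e : K) (k : 'I_d) : R :=
  (f (vk e k) - f (v0 e)) / hlen e k.

Definition intIh (F : V -> R) : R := intOmega (loc F).

Definition lumped (f g : V -> R) : R := intIh (fun v => f v * g v).

Definition gradprod (f g : V -> R) : R :=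
  intOmega (fun e _ => \sum_(k < d) grad f e k * grad g e k).

End Mesh.

Definition Fpot {R : realType} (eta x : R) : R := (x ^+ 2 * (x - 1) ^+ 2) / (4 * eta ^+ 2).
Definition Fc' {R : realType} (eta x : R) : R :=
  (4 * x ^+ 3 - 6 * x ^+ 2 + 3 * x) / (4 * eta ^+ 2).
Definition Fe' {R : realType} (eta x : R) : R := - x / (4 * eta ^+ 2).

Definition Jfun {R : realType} (x : R) : R :=
  (1 - 2 * x) * asin (Num.sqrt (1 - x)) + Num.sqrt ((1 - x) * x)
  + 2 * asin (Num.sqrt (1 / 2)) * x.

Definition taylor2 {R : realType} (a x : R) : R :=
  Jfun a + derive1 Jfun a * (x - a) + derive1n 2 Jfun a / 2 * (x - a) ^+ 2.

Definition Jeps {R : realType} (eps x : R) : R :=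
  if x < eps then taylor2 eps x
  else if 1 - eps < x then taylor2 (1 - eps) x
  else Jfun x.

Definition Jeps' {R : realType} (eps : R) : R -> R := derive1 (Jeps eps).
Definition Jeps'' {R : realType} (eps : R) : R -> R := derive1n 2 (Jeps eps).

Section Scheme.
Variables (R : realType) (d : nat) (V K : finType).
Variable X : V -> 'I_d -> R.
Variable vtx : K -> 'I_d.+1 -> V.

Definition MJ (eps : R) (phi : V -> R) (e : K) (k : 'I_d) : R :=
  let a := phi (v0 vtx e) in
  let b := phi (vk vtx e k) in
  if b != a then ((b - a) / (Jeps' eps b - Jeps' eps a)) ^+ 2
  else ((Jeps'' eps a)^-1) ^+ 2.

Definition Mgradprod (eps : R) (phi mu nu : V -> R) : R :=
  intOmega X vtx (fun e _ => \sum_(k < d) MJ eps phi e k * grad X vtx mu e k * grad X vtx nu e k).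

Definition energy (eta : R) (phi : V -> R) : R :=
  intOmega X vtx (fun e p => (\sum_(k < d) grad X vtx phi e k ^+ 2) / 2
                             + Fpot eta (loc vtx phi e p)).

Definition scheme_step (eta eps dt : R) (phin phi1 mu1 : V -> R) : Prop :=
  (forall mub : V -> R,
      lumped X vtx (fun v => phi1 v - phin v) mub / dt
      + Mgradprod eps phi1 mu1 mub = 0) /\
  (forall phib : V -> R,
      gradprod X vtx phi1 phib
      + intOmega X vtx (fun e p => (Fc' eta (loc vtx phi1 e p) + Fe' eta (loc vtx phin e p))
                                   * loc vtx phib e p)
      = lumped X vtx mu1 phib).

Definition intIhJ (eps : R) (phi : V -> R) : R :=
  intIh X vtx (fun v => Jeps eps (phi v)).

End Scheme.

(* Main.v *)
Require Import Defs.
From HB Require Import structures.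
From mathcomp Require Import all_boot all_order all_algebra.
From mathcomp Require Import all_classical all_reals all_analysis.
From mathcomp Require Import ring lra.
Import Order.TTheory GRing.Theory Num.Theory.
Import numFieldNormedType.Exports.
Local Open Scope ring_scope.
Section PolyInt.
Variable R : realType.

Fixpoint mono (m : seq nat) (p : nat -> R) : R :=
  if m is a :: m' then p 0%N ^+ a * mono m' (fun i => p i.+1) else 1.

Definition evalL (L : seq (R * seq nat)) (p : nat -> R) : R :=
  \sum_(x <- L) x.1 * mono x.2 p.

Definition embed (t : R) (y : nat -> R) : nat -> R :=
  fun i => if i is i'.+1 then (1 - t) * y i' else t.

Lemma mono_scale m c y : mono m (fun i => c * y i) = c ^+ sumn m * mono m y.
Proof.
elim: m y => [|a m IH] y /=; first by rewrite expr0 mulr1.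
rewrite (IH (fun i => y i.+1)) exprMn exprD; ring.
Qed.

Lemma mono_embed m t y : mono m (embed t y) =
  t ^+ head 0%N m * ((1 - t) ^+ sumn (behead m) * mono (behead m) y).
Proof.
case: m => [|a m] /=; first by rewrite !expr0 !mulr1.
by rewrite (mono_scale m (1 - t) y).
Qed.

Definition Lt t (L : seq (R * seq nat)) :=
  [seq (x.1 * (t ^+ head 0%N x.2 * (1 - t) ^+ sumn (behead x.2)), behead x.2) | x <- L].

Lemma evalL_embed L t y : evalL L (embed t y) = evalL (Lt t L) y.
Proof.
rewrite /evalL /Lt big_map; apply: eq_bigr => x _ /=.
by rewrite mono_embed; ring.
Qed.

Definition simp (d : nat) (p : nat -> R) : Prop :=
  (forall k, (k < d)%N -> 0 <= p k) /\ \sum_(k < d) p k <= 1.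

Lemma simp_embed d t y : 0 <= t <= 1 -> simp d y -> simp d.+1 (embed t y).
Proof.
move=> /andP[t0 t1] [y0 ys]; split.
  case=> [|k] //= /y0 yk; apply: mulr_ge0 => //; lra.
rewrite big_ord_recl /=.
have -> : \sum_(i < d) embed t y (bump 0 i) = (1 - t) * \sum_(i < d) y i.
  by rewrite mulr_sumr; apply: eq_bigr.
have : (1 - t) * \sum_(i < d) y i <= (1 - t) * 1.
  by apply: ler_wpM2l => //; lra.
lra.
Qed.

Definition Rint (f : R -> R) : R :=
  Rintegral (@lebesgue_measure R) `[0%R, 1%R] f.

Lemma refintS d g : refint d.+1 g =
  Rint (fun t => (1 - t) ^+ d * refint d (fun y => g (embed t y))).
Proof. by []. Qed.

Lemma horner_integrable (P : {poly R}) :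
  (@lebesgue_measure R).-integrable `[0%R, 1%R] (EFin \o horner P).
Proof.
apply: continuous_compact_integrable; first exact: segment_compact.
apply: continuous_subspaceT; exact: continuous_horner.
Qed.

Lemma Rint_sum (I : Type) (r : seq I) (P : I -> {poly R}) :
  Rint (fun t => \sum_(x <- r) (P x).[t]) = \sum_(x <- r) Rint (horner (P x)).
Proof.
elim: r => [|x r IH].
  rewrite big_nil /Rint.
  rewrite (_ : (fun t => \sum_(x <- [::]) (P x).[t]) = (fun=> 0)); last first.
    by apply: funext => t; rewrite big_nil.
  by rewrite Rintegral_cst ?mul0r //; exact: measurable_itv.
rewrite big_cons /Rint.
rewrite (_ : (fun t => \sum_(x0 <- x :: r) (P x0).[t]) =
   (fun t => (P x).[t] + \sum_(x0 <- r) (P x0).[t])); last first.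
  by apply: funext => t; rewrite big_cons.
rewrite RintegralD //; first by rewrite -IH.
- exact: horner_integrable.
- have -> : (fun t => \sum_(x <- r) (P x).[t]) = horner (\sum_(x <- r) P x).
    by apply: funext => t; rewrite horner_sum.
  exact: horner_integrable.
Qed.

End PolyInt.
Arguments mono {R}. Arguments evalL {R}. Arguments embed {R}. Arguments Lt {R}.
Arguments simp {R}. Arguments Rint {R}.
Section PolyInt2.
Variable R : realType.

Lemma refint_ext d (g h : (nat -> R) -> R) : (forall p, g p = h p) -> refint d g = refint d h.
Proof. by move=> gh; congr refint; apply: funext. Qed.

Arguments refint_ext {d g h}.

Lemma horner1X (t : R) : (1 - 'X).[t] = 1 - t.
Proof. by rewrite hornerD hornerN hornerX hornerC. Qed.

Lemma RintZ c (B : {poly R}) : Rint (horner (c *: B)) = c * Rint (horner B).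
Proof.
have -> : horner (c *: B) = (fun t => c * B.[t]) by apply: funext => t; rewrite hornerZ.
by rewrite /Rint RintegralZl //; exact: horner_integrable.
Qed.

Definition Qp d (L : seq (R * seq nat)) : {poly R} :=
  \sum_(x <- L) (x.1 * refint d (@mono R (behead x.2))) *:
     ((1 - 'X) ^+ d * ('X ^+ (head 0%N x.2) * (1 - 'X) ^+ (sumn (behead x.2)))).

Theorem refint_poly d :
 (forall L : seq (R * seq nat), refint d (evalL L) = \sum_(x <- L) x.1 * refint d (@mono R x.2)) /\
 (forall L1 L2 : seq (R * seq nat), (forall p, simp d p -> evalL L1 p <= evalL L2 p) ->
     refint d (evalL L1) <= refint d (evalL L2)).
Proof.
elim: d => [|d [IHa IHb]].
  split; first by [].
  move=> L1 L2 H; apply: H; split => //.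
  by rewrite big_ord0 ler01.
have form : forall L t, (1 - t) ^+ d * refint d (fun y => evalL L (embed t y)) = (Qp d L).[t].
  move=> L t.
  rewrite (refint_ext (fun y => evalL_embed _ L t y)) IHa /Lt big_map horner_sum mulr_sumr.
  apply: eq_bigr => x _ /=.
  rewrite hornerZ !hornerM !horner_exp hornerX !horner1X; ring.
have RQ : forall L, refint d.+1 (evalL L) = Rint (horner (Qp d L)).
  move=> L; rewrite refintS; congr Rint; apply: funext => t; exact: form.
split.
  move=> L; rewrite RQ.
  rewrite (_ : horner (Qp d L) = fun t => \sum_(x <- L) (((x.1 * refint d (@mono R (behead x.2))) *:
     ((1 - 'X) ^+ d * ('X ^+ (head 0%N x.2) * (1 - 'X) ^+ (sumn (behead x.2)))))).[t]); last first.
    by apply: funext => t; rewrite /Qp horner_sum.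
  rewrite Rint_sum; apply: eq_bigr => x _.
  have -> : @refint R d.+1 (mono x.2) = refint d.+1 (evalL [:: (1, x.2)]).
    by apply: refint_ext => p; rewrite /evalL big_seq1 /= mul1r.
  rewrite RQ /Qp big_seq1 /= !RintZ; ring.
move=> L1 L2 H; rewrite !RQ /Rint.
apply: le_Rintegral => //; try exact: horner_integrable.
move=> t; rewrite /= in_itv /= => t01; change ((Qp d L1).[t] <= (Qp d L2).[t]).
rewrite -!form; apply: ler_wpM2l.
  by apply: exprn_ge0; case/andP: t01 => _ t1; lra.
rewrite (refint_ext (fun y => evalL_embed _ L1 t y)) (refint_ext (fun y => evalL_embed _ L2 t y)).
apply: IHb => y sy; rewrite -!evalL_embed; apply: H; exact: simp_embed.
Qed.

End PolyInt2.
Arguments refint_ext {R d g h}.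
Section IsPolySec.
Context {R : realType}.

Definition IsPoly (g : (nat -> R) -> R) : Prop :=
  exists L : seq (R * seq nat), forall p, g p = evalL L p.

Fixpoint madd (m1 m2 : seq nat) : seq nat :=
  match m1, m2 with
  | [::], _ => m2
  | _, [::] => m1
  | a :: r, b :: s => (a + b)%N :: madd r s
  end.

Lemma mono_madd m1 m2 (p : nat -> R) : mono (madd m1 m2) p = mono m1 p * mono m2 p.
Proof.
elim: m1 m2 p => [|a m1 IH] [|b m2] p /=; rewrite ?mul1r ?mulr1 //.
by rewrite IH exprD; ring.
Qed.

Lemma mono_var k (p : nat -> R) : mono (rcons (nseq k 0%N) 1%N) p = p k.
Proof.
elim: k p => [|k IH] p /=; first by rewrite expr1 mulr1.
by rewrite IH expr0 mul1r.
Qed.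

Lemma IsPoly_const c : IsPoly (fun _ => c).
Proof. by exists [:: (c, [::])] => p; rewrite /evalL big_seq1 /= mulr1. Qed.

Lemma IsPoly_var k : IsPoly (fun p => p k).
Proof. by exists [:: (1, rcons (nseq k 0%N) 1%N)] => p; rewrite /evalL big_seq1 /= mono_var mul1r. Qed.

Lemma IsPoly_add g h : IsPoly g -> IsPoly h -> IsPoly (fun p => g p + h p).
Proof.
move=> [L1 H1] [L2 H2]; exists (L1 ++ L2) => p.
by rewrite /evalL big_cat /= H1 H2.
Qed.

Lemma IsPoly_opp g : IsPoly g -> IsPoly (fun p => - g p).
Proof.
move=> [L1 H1]; exists [seq (- x.1, x.2) | x <- L1] => p.
rewrite /evalL big_map H1 /evalL -sumrN; apply: eq_bigr => x _ /=; ring.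
Qed.

Lemma IsPoly_sub g h : IsPoly g -> IsPoly h -> IsPoly (fun p => g p - h p).
Proof. by move=> Hg Hh; apply: IsPoly_add => //; apply: IsPoly_opp. Qed.

Lemma IsPoly_mul g h : IsPoly g -> IsPoly h -> IsPoly (fun p => g p * h p).
Proof.
move=> [L1 H1] [L2 H2].
exists [seq (x.1 * y.1, madd x.2 y.2) | x <- L1, y <- L2] => p.
rewrite /evalL big_allpairs_dep H1 H2 /evalL mulr_suml; apply: eq_bigr => x _.
rewrite mulr_sumr; apply: eq_bigr => y _ /=; rewrite mono_madd; ring.
Qed.

Lemma IsPoly_exp g n : IsPoly g -> IsPoly (fun p => g p ^+ n).
Proof.
move=> Hg; elim: n => [|n IH].
  by apply: (@eq_ind _ _ IsPoly (IsPoly_const 1)); apply: funext => p; rewrite expr0.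
have -> : (fun p => g p ^+ n.+1) = (fun p => g p * g p ^+ n).
  by apply: funext => p; rewrite exprS.
exact: IsPoly_mul.
Qed.

Lemma IsPoly_sum (I : Type) (r : seq I) (f : I -> (nat -> R) -> R) :
  (forall i, IsPoly (f i)) -> IsPoly (fun p => \sum_(i <- r) f i p).
Proof.
move=> Hf; elim: r => [|i r IH].
  by apply: (@eq_ind _ _ IsPoly (IsPoly_const 0)); apply: funext => p; rewrite big_nil.
have -> : (fun p => \sum_(j <- i :: r) f j p) = (fun p => f i p + \sum_(j <- r) f j p).
  by apply: funext => p; rewrite big_cons.
exact: IsPoly_add.
Qed.

Lemma IsPoly_sumI (I : finType) (f : I -> (nat -> R) -> R) :
  (forall i, IsPoly (f i)) -> IsPoly (fun p => \sum_(i : I) f i p).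
Proof.
move=> Hf; exact: (@IsPoly_sum I (index_enum I) f Hf).
Qed.

Lemma refint_add d g h : IsPoly g -> IsPoly h ->
  refint d (fun p => g p + h p) = refint d g + refint d h.
Proof.
move=> [L1 H1] [L2 H2]; have [Ha _] := refint_poly R d.
rewrite (refint_ext H1) (refint_ext H2).
rewrite (@refint_ext _ _ _ (evalL (L1 ++ L2))); last first.
  by move=> p; rewrite H1 H2 /evalL big_cat.
by rewrite !Ha big_cat.
Qed.

Lemma refint_scale d c g : IsPoly g -> refint d (fun p => c * g p) = c * refint d g.
Proof.
move=> [L1 H1]; have [Ha _] := refint_poly R d.
rewrite (refint_ext H1).
rewrite (@refint_ext _ _ _ (evalL [seq (c * x.1, x.2) | x <- L1])); last first.
  by move=> p; rewrite H1 /evalL big_map mulr_sumr; apply: eq_bigr => x _ /=; ring.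
rewrite !Ha big_map mulr_sumr; apply: eq_bigr => x _ /=; ring.
Qed.

Lemma refint_le d g h : IsPoly g -> IsPoly h ->
  (forall p, simp d p -> g p <= h p) -> refint d g <= refint d h.
Proof.
move=> [L1 H1] [L2 H2] H; have [_ Hb] := refint_poly R d.
rewrite (refint_ext H1) (refint_ext H2); apply: Hb => p sp.
by rewrite -H1 -H2; apply: H.
Qed.

End IsPolySec.

Section Glue.
Context {R : realType}.
Local Open Scope classical_set_scope.

Lemma glue (f g k : R -> R) (a L δ δ' : R) : 0 < δ -> 0 < δ' ->
  (forall x, a - δ < x <= a -> f x = g x) ->
  (forall x, a <= x < a + δ' -> f x = k x) ->
  is_derive a 1 g L -> is_derive a 1 k L -> is_derive a 1 f L.
Proof.
move=> d0 d0' Hg Hk [dg Dg] [dk Dk].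
have cg : (fun h => h^-1 *: ((g \o shift a) (h *: 1) - g a)) @ 0^' --> L.
  by rewrite -Dg; exact: dg.
have ck : (fun h => h^-1 *: ((k \o shift a) (h *: 1) - k a)) @ 0^' --> L.
  by rewrite -Dk; exact: dk.
have cf : (fun h => h^-1 *: ((f \o shift a) (h *: 1) - f a)) @ 0^' --> L.
  apply/cvgrPdist_lt => e e0.
  have /cvgrPdist_lt/(_ e e0) Ng := cg.
  have /cvgrPdist_lt/(_ e e0) Nk := ck.
  near=> h.
  have hd : `|h| < δ.
    near: h; exact: dnbhs0_lt.
  have hd' : `|h| < δ'.
    near: h; exact: dnbhs0_lt.
  have fa : f a = g a by apply: Hg; rewrite lexx andbT; lra.
  have fa' : f a = k a by apply: Hk; rewrite lexx /=; lra.
  case: (lerP h 0) => [hle|hgt].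
  - have -> : (f \o shift a) h%:A = (g \o shift a) h%:A.
      rewrite /= /GRing.scale /= mulr1; apply: Hg.
      move: hd; rewrite ler0_norm //; lra.
    rewrite fa.
    near: h; exact: Ng.
  - have -> : (f \o shift a) h%:A = (k \o shift a) h%:A.
      rewrite /= /GRing.scale /= mulr1; apply: Hk.
      move: hd'; rewrite gtr0_norm //; lra.
    rewrite fa'.
    near: h; exact: Nk.
apply: DeriveDef; first exact: cvgP cf.
exact: cvg_lim cf.
Unshelve. all: by end_near.
Qed.

End Glue.
Section Calc.
Context {R : realType}.
Local Open Scope classical_set_scope.

Lemma is_derive_onem (x : R) : is_derive x 1 (fun y : R => 1 - y) (-1).
Proof.
have H : is_derive x 1 (cst (1:R) - id) (0 - 1) by apply: is_deriveB.
by rewrite sub0r in H.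
Qed.

Lemma is_derive_sqrt1m (x : R) : x < 1 ->
  is_derive x 1 (fun y : R => Num.sqrt (1 - y)) ((2 * Num.sqrt (1 - x))^-1 * (-1)).
Proof.
move=> x1.
have H : is_derive x 1 (Num.sqrt \o (fun y : R => 1 - y)) ((2 * Num.sqrt (1 - x))^-1 * (-1)).
  apply: is_derive1_comp; last exact: is_derive_onem.
  apply: is_derive1_sqrt; rewrite subr_gt0 //.
exact: H.
Qed.


Lemma is_derive_lin (x a b : R) : is_derive x 1 (fun y : R => a + b * y) b.
Proof.
have H : is_derive x 1 (cst a + b \*: id) (0 + b *: 1) by apply: is_deriveD.
rewrite add0r /GRing.scale /= mulr1 in H; exact: H.
Qed.

Lemma sqrt1m_lt1 (x : R) : 0 < x < 1 -> -1 < Num.sqrt (1 - x) < 1.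
Proof.
move=> /andP[x0 x1]; apply/andP; split.
  apply: (@lt_le_trans _ _ 0); [lra | exact: sqrtr_ge0].
rewrite -{2}sqrtr1 ltr_sqrt; lra.
Qed.

Definition Jp (x : R) : R := 2 * asin (Num.sqrt (1 / 2)) - 2 * asin (Num.sqrt (1 - x)).

Lemma is_derive_Jfun (x : R) : 0 < x < 1 -> is_derive x 1 (@Jfun R) (Jp x).
Proof.
move=> /[dup] x01 /andP[x0 x1].
have Hs := @is_derive_sqrt1m x x1.
have Ha : is_derive x 1 (fun y : R => asin (Num.sqrt (1 - y)))
   ((Num.sqrt (1 - Num.sqrt (1 - x) ^+ 2))^-1 * ((2 * Num.sqrt (1 - x))^-1 * (-1))).
  have H : is_derive x 1 (asin \o (fun y : R => Num.sqrt (1 - y)))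
     ((Num.sqrt (1 - Num.sqrt (1 - x) ^+ 2))^-1 * ((2 * Num.sqrt (1 - x))^-1 * (-1))).
    apply: is_derive1_comp => //; apply: is_derive1_asin; exact: sqrt1m_lt1.
  exact: H.
have Hw : is_derive x 1 (fun y : R => Num.sqrt ((1 - y) * y))
    ((2 * Num.sqrt ((1 - x) * x))^-1 * ((1 - x) *: 1 + x *: (-1))).
  have H : is_derive x 1 (Num.sqrt \o ((fun y : R => 1 - y) * id))
    ((2 * Num.sqrt ((1 - x) * x))^-1 * ((1 - x) *: 1 + x *: (-1))).
    apply: is_derive1_comp.
      apply: is_derive1_sqrt; rewrite /= mulr_gt0 //; lra.
    apply: is_deriveM; first exact: is_derive_onem.
  exact: H.
have Hp : is_derive x 1 (fun y : R => (1 + (-2) * y) * asin (Num.sqrt (1 - y)))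
   ((1 + (-2) * x) *: ((Num.sqrt (1 - Num.sqrt (1 - x) ^+ 2))^-1 * ((2 * Num.sqrt (1 - x))^-1 * (-1)))
    + asin (Num.sqrt (1 - x)) *: (-2)).
  have H : is_derive x 1 ((fun y : R => 1 + (-2) * y) * (fun y : R => asin (Num.sqrt (1 - y))))
   ((1 + (-2) * x) *: ((Num.sqrt (1 - Num.sqrt (1 - x) ^+ 2))^-1 * ((2 * Num.sqrt (1 - x))^-1 * (-1)))
    + asin (Num.sqrt (1 - x)) *: (-2)).
    apply: is_deriveM => //; exact: is_derive_lin.
  exact: H.
have Hc := is_derive_lin x 0 (2 * asin (Num.sqrt (1 / 2))).
have H : is_derive x 1 ((fun y : R => (1 + (-2) * y) * asin (Num.sqrt (1 - y))) +
   (fun y : R => Num.sqrt ((1 - y) * y)) + (fun y : R => 0 + 2 * asin (Num.sqrt (1 / 2)) * y))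
   (((1 + (-2) * x) *: ((Num.sqrt (1 - Num.sqrt (1 - x) ^+ 2))^-1 * ((2 * Num.sqrt (1 - x))^-1 * (-1)))
    + asin (Num.sqrt (1 - x)) *: (-2)) + 
    ((2 * Num.sqrt ((1 - x) * x))^-1 * ((1 - x) *: 1 + x *: (-1))) +
    2 * asin (Num.sqrt (1 / 2))).
  by apply: is_deriveD => //; apply: is_deriveD.
have -> : @Jfun R = ((fun y : R => (1 + (-2) * y) * asin (Num.sqrt (1 - y))) +
   (fun y : R => Num.sqrt ((1 - y) * y)) + (fun y : R => 0 + 2 * asin (Num.sqrt (1 / 2)) * y)).
  apply: funext => y; rewrite /Jfun /=; congr (_ * _ + _ + _); ring.
apply: is_derive_eq H _.
have sx := sqrtr_gt0 x; have s1x := sqrtr_gt0 (1 - x).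
have e1 : Num.sqrt (1 - x) ^+ 2 = 1 - x by rewrite sqr_sqrtr //; lra.
have e2 : Num.sqrt ((1 - x) * x) = Num.sqrt (1 - x) * Num.sqrt x by rewrite sqrtrM //; lra.
rewrite e1 e2 (_ : 1 - (1 - x) = x); last by ring.
rewrite /Jp /GRing.scale /=.
have p1 : 0 < Num.sqrt x by rewrite sqrtr_gt0.
have p2 : 0 < Num.sqrt (1 - x) by rewrite sqrtr_gt0; lra.
field; apply/andP; split; rewrite gt_eqF //.
Qed.


Definition Jpp (x : R) : R := (Num.sqrt x * Num.sqrt (1 - x))^-1.

Lemma Jpp_gt0 (x : R) : 0 < x < 1 -> 0 < Jpp x.
Proof.
move=> /andP[x0 x1]; rewrite /Jpp invr_gt0 mulr_gt0 // sqrtr_gt0 //; lra.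
Qed.

Lemma is_derive_Jp (x : R) : 0 < x < 1 -> is_derive x 1 Jp (Jpp x).
Proof.
move=> /[dup] x01 /andP[x0 x1].
have Ha : is_derive x 1 (fun y : R => asin (Num.sqrt (1 - y)))
   ((Num.sqrt (1 - Num.sqrt (1 - x) ^+ 2))^-1 * ((2 * Num.sqrt (1 - x))^-1 * (-1))).
  have H : is_derive x 1 (asin \o (fun y : R => Num.sqrt (1 - y)))
     ((Num.sqrt (1 - Num.sqrt (1 - x) ^+ 2))^-1 * ((2 * Num.sqrt (1 - x))^-1 * (-1))).
    apply: is_derive1_comp; last exact: is_derive_sqrt1m.
    apply: is_derive1_asin; exact: sqrt1m_lt1.
  exact: H.
have H : is_derive x 1 (cst (2 * asin (Num.sqrt (1 / 2))) - (2:R) \*: (fun y : R => asin (Num.sqrt (1 - y))))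
   (0 - 2 *: ((Num.sqrt (1 - Num.sqrt (1 - x) ^+ 2))^-1 * ((2 * Num.sqrt (1 - x))^-1 * (-1)))).
  by apply: is_deriveB; apply: is_deriveZ.
have -> : Jp = (cst (2 * asin (Num.sqrt (1 / 2))) - (2:R) \*: (fun y : R => asin (Num.sqrt (1 - y)))).
  by apply: funext => y.
apply: is_derive_eq H _.
have e1 : Num.sqrt (1 - x) ^+ 2 = 1 - x by rewrite sqr_sqrtr //; lra.
rewrite e1 (_ : 1 - (1 - x) = x); last by ring.
rewrite /Jpp /GRing.scale /=.
have p1 : 0 < Num.sqrt x by rewrite sqrtr_gt0.
have p2 : 0 < Num.sqrt (1 - x) by rewrite sqrtr_gt0; lra.
field; apply/andP; split; rewrite gt_eqF //.
Qed.

Lemma derive1_Jfun (x : R) : 0 < x < 1 -> derive1 (@Jfun R) x = Jp x.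
Proof. by move=> /is_derive_Jfun [_ E]; rewrite derive1E. Qed.

Lemma derive2_Jfun (x : R) : 0 < x < 1 -> derive1n 2 (@Jfun R) x = Jpp x.
Proof.
move=> x01.
rewrite /derive1n /= derive1E.
have -> : 'D_1 (derive1 (@Jfun R)) x = 'D_1 Jp x.
  apply: near_eq_derive.
  have : x \in `]0, 1[%R by rewrite in_itv /=.
  move=> /near_in_itvoo xI; near=> y.
  apply: derive1_Jfun.
  have : y \in `]0, 1[%R by near: y.
  by rewrite in_itv.
by have [_ ->] := is_derive_Jp x x01.
Unshelve. all: by end_near.
Qed.


Definition T (a y : R) : R := Jfun a + Jp a * (y - a) + Jpp a / 2 * (y - a) ^+ 2.

Lemma taylor2E (a y : R) : 0 < a < 1 -> taylor2 a y = T a y.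
Proof. by move=> a01; rewrite /taylor2 /T derive1_Jfun // derive2_Jfun. Qed.

Lemma is_derive_T (a x : R) : is_derive x 1 (T a) (Jp a + Jpp a * (x - a)).
Proof.
have sc : forall u v : R, u *: v = u * v by [].
have Hl := is_derive_lin x (- a) 1.
have H1 : is_derive x 1 (fun y : R => - a + 1 * y) 1 := Hl.
have H2 : is_derive x 1 ((fun y : R => - a + 1 * y) ^+ 2) ((2%:R * (- a + 1 * x) ^+ 1) *: 1).
  exact: is_deriveX.
have H : is_derive x 1 (cst (Jfun a) + Jp a \*: (fun y : R => - a + 1 * y)
            + (Jpp a / 2) \*: ((fun y : R => - a + 1 * y) ^+ 2))
   (0 + Jp a *: 1 + (Jpp a / 2) *: ((2%:R * (- a + 1 * x) ^+ 1) *: 1)).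
  exact: is_deriveD.
have -> : T a = (cst (Jfun a) + Jp a \*: (fun y : R => - a + 1 * y)
            + (Jpp a / 2) \*: ((fun y : R => - a + 1 * y) ^+ 2)).
  apply: funext => y.
  transitivity (Jfun a + Jp a * (- a + 1 * y) + Jpp a / 2 * (- a + 1 * y) ^+ 2); last by [].
  by rewrite /T mul1r [- a + y]addrC.
apply: is_derive_eq H _.
transitivity (0 + Jp a * 1 + (Jpp a / 2) * ((2%:R * (- a + 1 * x) ^+ 1) * 1)); first by [].
rewrite expr1 !mulr1 add0r mul1r; congr (_ + _).
rewrite mulrA -[Jpp a / 2 * 2]mulrA mulVf ?mulr1 ?[- a + x]addrC //.

Qed.

End Calc.
Section JepsCalc.
Context {R : realType}.
Variable e : R.
Hypothesis e0 : 0 < e.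
Hypothesis e12 : e < 1 / 2.

Let e2 : e * 2 < 1.
Proof. by move: e12; rewrite ltr_pdivlMr. Qed.

Let e01 : 0 < e < 1.
Proof. have h0 := e0; have h2 := e2; apply/andP; split => //; lra. Qed.
Let e01' : 0 < 1 - e < 1.
Proof. have h0 := e0; have h2 := e2; apply/andP; split; lra. Qed.

Lemma JepsE (y : R) : Jeps e y =
  if y < e then T e y else if 1 - e < y then T (1 - e) y else Jfun y.
Proof. by rewrite /Jeps !taylor2E. Qed.

Lemma TE (a : R) : T a a = Jfun a.
Proof. by rewrite /T !subrr expr0n /= !mulr0 !addr0. Qed.

Definition Dj (x : R) : R :=
  if x < e then Jp e + Jpp e * (x - e)
  else if 1 - e < x then Jp (1 - e) + Jpp (1 - e) * (x - (1 - e))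
  else Jp x.

Lemma is_derive_Jeps (x : R) : is_derive x 1 (Jeps e) (Dj x).
Proof.
have h0 := e0; have h2 := e2; have h3 := e01; have h4 := e01'.
have D1 : forall (a y : R), is_derive a 1 (T y) (if a == y then Jp y else Jp y + Jpp y * (a - y)).
  move=> a y; case: eqP => [->|_]; last exact: is_derive_T.
  by apply: is_derive_eq (is_derive_T y y) _; rewrite subrr mulr0 addr0.
rewrite /Dj.
case: (ltgtP x e) => [xe|ex|->].
- apply: (@glue _ _ (T e) (T e) _ _ (e - x) (e - x)); rewrite ?subr_gt0 //.
  + by move=> y /andP[yx0 yx]; rewrite JepsE ifT //; lra.
  + by move=> y /andP[yx0 yx]; rewrite JepsE ifT //; lra.
  + exact: is_derive_T.
  + exact: is_derive_T.
case: (ltgtP x (1 - e)) => [xe'|ex'|->].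
-   apply: (@glue _ _ Jfun Jfun _ _ (x - e) (1 - e - x)); rewrite ?subr_gt0 //; try lra.
  + move=> y /andP[yx yx0]; rewrite JepsE ifF ?ifF //; apply/negbTE; rewrite -leNgt; lra.
  + move=> y /andP[yx0 yx]; rewrite JepsE ifF ?ifF //; apply/negbTE; rewrite -leNgt; lra.
  + apply: is_derive_Jfun; apply/andP; split; lra.
  + apply: is_derive_Jfun; apply/andP; split; lra.
-   apply: (@glue _ _ (T (1 - e)) (T (1 - e)) _ _ (x - (1 - e)) (x - (1 - e))); rewrite ?subr_gt0 //.
  + move=> y /andP[yx yx0].
    have ny : (y < e) = false by apply/negbTE; rewrite -leNgt; lra.
    have py : 1 - e < y by lra.
    by rewrite JepsE ny py.
  + move=> y /andP[yx yx0].
    have ny : (y < e) = false by apply/negbTE; rewrite -leNgt; lra.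
    have py : 1 - e < y by lra.
    by rewrite JepsE ny py.
  + exact: is_derive_T.
  + exact: is_derive_T.
-   apply: (@glue _ _ Jfun (T (1 - e)) _ _ (1 - 2 * e) 1); try lra.
  + move=> y /andP[yx yx']; rewrite JepsE ifF ?ifF //; apply/negbTE; rewrite -leNgt; lra.
  + move=> y /andP[yx yx0]; rewrite JepsE ifF //; last first.
      by apply/negbTE; rewrite -leNgt; lra.
    case: ifP => // /negbT; rewrite -leNgt => yx'.
    have -> : y = 1 - e by lra.
    by rewrite TE.
  + exact: is_derive_Jfun.
  + by apply: is_derive_eq (is_derive_T _ _) _; rewrite subrr mulr0 addr0.
- have -> : (1 - e < e) = false by apply/negbTE; rewrite -leNgt; lra.
  apply: (@glue _ _ (T e) Jfun _ _ 1 (1 - 2 * e)); try lra.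
  + move=> y /andP[yx0 yx]; rewrite JepsE.
    case: ifP => // /negbT; rewrite -leNgt => yx'.
    have -> : y = e by lra.
    rewrite ifF ?TE //; apply/negbTE; rewrite -leNgt; lra.
  + move=> y /andP[yx yx']; rewrite JepsE ifF ?ifF //; apply/negbTE; rewrite -leNgt; lra.
  + by apply: is_derive_eq (is_derive_T _ _) _; rewrite subrr mulr0 addr0.
  + exact: is_derive_Jfun.
Qed.


Lemma isd_der {f : R -> R} {x df : R} : is_derive x 1 f df -> derivable f x 1.
Proof. by case. Qed.

Lemma Jp_mono (x y : R) : 0 < x -> y < 1 -> x <= y -> Jp x <= Jp y.
Proof.
move=> x0 y1 xy.
have hd : forall z, z \in `[x, y]%R -> is_derive z 1 Jp (Jpp z).
  move=> z; rewrite in_itv /= => /andP[? ?]; apply: is_derive_Jp; apply/andP; split; lra.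
have [c] := MVT_segment xy (fun z zi => hd z (subset_itv_oo_cc zi))
  (derivable_within_continuous (fun z zi => isd_der (hd z zi))).
rewrite in_itv /= => /andP[? ?] E.
have : 0 <= Jpp c * (y - x).
  apply: mulr_ge0; last lra.
  apply: ltW; apply: Jpp_gt0; apply/andP; split; lra.
lra.
Qed.

Lemma Dj_mono (x y : R) : x <= y -> Dj x <= Dj y.
Proof.
have h0 := e0; have h2 := e2.
have p1 : 0 < Jpp e by apply: Jpp_gt0; apply/andP; split; lra.
have p2 : 0 < Jpp (1 - e) by apply: Jpp_gt0; apply/andP; split; lra.
have m1 : Jp e <= Jp (1 - e) by apply: Jp_mono; lra.
move=> xy; rewrite /Dj.
case: ifP => xe; case: ifP => ye; try (case: ifP => x1e); try (case: ifP => y1e).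
all: try (move/negbT: xe; rewrite -leNgt => xe).
all: try (move/negbT: ye; rewrite -leNgt => ye).
all: try (move/negbT: x1e; rewrite -leNgt => x1e).
all: try (move/negbT: y1e; rewrite -leNgt => y1e).
all: try lra.
all: try nra.
- have : Jp e <= Jp y by apply: Jp_mono; lra.
  nra.
- have : Jp x <= Jp (1 - e) by apply: Jp_mono; lra.
  nra.
- apply: Jp_mono; lra.
Qed.

Lemma Jeps_conv (a b : R) : Jeps e b - Jeps e a <= Jeps' e b * (b - a).
Proof.
have Jd : forall z : R, is_derive z 1 (Jeps e) (Dj z) := is_derive_Jeps.
have -> : Jeps' e b = Dj b.
  by rewrite /Jeps' derive1E; have [_ ->] := Jd b.
have cont : forall u v : R, {within `[u, v], continuous (Jeps e)}%classic.
  move=> u v; apply: derivable_within_continuous => z _; exact: isd_der (Jd z).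
case: (ltgtP a b) => [ab|ba|->]; last by rewrite !subrr mulr0.
- have [c] := MVT ab (fun z _ => Jd z) (cont a b).
  rewrite in_itv /= => /andP[c1 c2] ->.
  apply: ler_wpM2r; [lra | apply: Dj_mono; lra].
- have [c] := MVT ba (fun z _ => Jd z) (cont b a).
  rewrite in_itv /= => /andP[c1 c2] E.
  have : Dj b <= Dj c by apply: Dj_mono; lra.
  have : 0 < a - b by lra.
  nra.
Qed.

End JepsCalc.
Section MeshLemmas.
Context {R : realType} {d : nat} {V K : finType}.
Variable X : V -> 'I_d -> R.
Variable vtx : K -> 'I_d.+1 -> V.

Lemma jac_ge0 (e : K) : 0 <= jac X vtx e.
Proof. by apply: prodr_ge0 => k _; exact: normr_ge0. Qed.

Lemma IsPoly_loc (F : V -> R) (e : K) : IsPoly (loc vtx F e).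
Proof.
rewrite /loc; apply: IsPoly_add; first exact: IsPoly_const.
apply: IsPoly_sumI => k; apply: IsPoly_mul; first exact: IsPoly_var.
exact: IsPoly_const.
Qed.

Lemma intOmega_ext (g h : K -> (nat -> R) -> R) : (forall e p, g e p = h e p) -> intOmega X vtx g = intOmega X vtx h.
Proof. by move=> H; congr intOmega; apply: funext => e; apply: funext => p. Qed.

Lemma intOmega_add (g h : K -> (nat -> R) -> R) : (forall e, IsPoly (g e)) -> (forall e, IsPoly (h e)) ->
  intOmega X vtx (fun e p => g e p + h e p) = intOmega X vtx g + intOmega X vtx h.
Proof.
move=> Hg Hh; rewrite /intOmega -big_split /=; apply: eq_bigr => e _.
by rewrite refint_add // mulrDr.
Qed.

Lemma intOmega_scale (c : R) (g : K -> (nat -> R) -> R) : (forall e, IsPoly (g e)) ->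
  intOmega X vtx (fun e p => c * g e p) = c * intOmega X vtx g.
Proof.
move=> Hg; rewrite /intOmega mulr_sumr; apply: eq_bigr => e _.
by rewrite refint_scale //; ring.
Qed.

Lemma intOmega_sub (g h : K -> (nat -> R) -> R) : (forall e, IsPoly (g e)) -> (forall e, IsPoly (h e)) ->
  intOmega X vtx (fun e p => g e p - h e p) = intOmega X vtx g - intOmega X vtx h.
Proof.
move=> Hg Hh.
rewrite -[intOmega X vtx h]mul1r -mulNr -intOmega_scale // -intOmega_add //.
  by apply: intOmega_ext => e p; ring.
by move=> e; apply: IsPoly_mul => //; exact: IsPoly_const.
Qed.

Lemma intOmega_le (g h : K -> (nat -> R) -> R) : (forall e, IsPoly (g e)) -> (forall e, IsPoly (h e)) ->
  (forall e p, simp d p -> g e p <= h e p) -> intOmega X vtx g <= intOmega X vtx h.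
Proof.
move=> Hg Hh H; rewrite /intOmega; apply: ler_sum => e _.
apply: ler_wpM2l; first exact: jac_ge0.
by apply: refint_le => // p sp; apply: H.
Qed.

Lemma intOmega0 : intOmega X vtx (fun _ _ => 0) = 0.
Proof.
rewrite -{2}(mul0r (intOmega X vtx (fun _ _ => 0))) -intOmega_scale.
  by apply: intOmega_ext => e p; rewrite mul0r.
move=> e; exact: IsPoly_const.
Qed.

Lemma loc_lin (F G : V -> R) a b e p :
  loc vtx (fun v => a * F v + b * G v) e p = a * loc vtx F e p + b * loc vtx G e p.
Proof.
rewrite /loc.
have -> : \sum_(i < d) p i * (a * F (vk vtx e i) + b * G (vk vtx e i) - (a * F (v0 vtx e) + b * G (v0 vtx e)))
  = a * \sum_(i < d) p i * (F (vk vtx e i) - F (v0 vtx e)) + b * \sum_(i < d) p i * (G (vk vtx e i) - G (v0 vtx e)).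
  by rewrite !mulr_sumr -big_split; apply: eq_bigr => i _ /=; ring.
ring.
Qed.

Lemma loc_mono (F G : V -> R) e p : (forall v, F v <= G v) -> simp d p ->
  loc vtx F e p <= loc vtx G e p.
Proof.
move=> FG [p0 ps].
have E : forall H : V -> R, loc vtx H e p =
   (1 - \sum_(k < d) p k) * H (v0 vtx e) + \sum_(k < d) p k * H (vk vtx e k).
  move=> H; rewrite /loc mulrBl mul1r mulr_suml.
  have -> : \sum_(k < d) p k * (H (vk vtx e k) - H (v0 vtx e)) =
    \sum_(k < d) p k * H (vk vtx e k) - \sum_(k < d) p k * H (v0 vtx e).
    by rewrite -sumrB; apply: eq_bigr => k _; ring.
  ring.
rewrite !E; apply: lerD.
  by apply: ler_wpM2l; [rewrite subr_ge0 | exact: FG].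
apply: ler_sum => k _; apply: ler_wpM2l; [exact: p0 | exact: FG].
Qed.

Lemma intIh_mono (F G : V -> R) : (forall v, F v <= G v) -> intIh X vtx F <= intIh X vtx G.
Proof.
move=> FG; apply: intOmega_le; try (move=> e; exact: IsPoly_loc).
by move=> e p sp; apply: loc_mono.
Qed.

Lemma intIh_sub (F G : V -> R) : intIh X vtx (fun v => F v - G v) = intIh X vtx F - intIh X vtx G.
Proof.
rewrite /intIh -intOmega_sub; try (move=> e; exact: IsPoly_loc).
apply: intOmega_ext => e p.
have := loc_lin F G 1 (-1) e p; rewrite !mul1r !mulN1r => <-.
by congr loc; apply: funext => v; ring.
Qed.

End MeshLemmas.
Section Part1.
Context {R : realType}.

Lemma sq_div_bound (u w h : R) : (u / w) ^+ 2 * (w / h) ^+ 2 <= (u / h) ^+ 2.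
Proof.
have [->|w0] := eqVneq w 0.
  by rewrite invr0 mulr0 expr0n /= mul0r; exact: sqr_ge0.
by rewrite -exprMn mulrA divfK.
Qed.

Lemma key_ineq (M a b c : R) : 0 <= M -> M * b ^+ 2 <= c ^+ 2 ->
  - (M * a * b) <= M * a * a + c * c.
Proof.
move=> hM hb.
have h1 := mulr_ge0 hM (sqr_ge0 (a + b)).
have h2 := mulr_ge0 hM (sqr_ge0 a).
have h3 := sqr_ge0 c.
nra.
Qed.

Context {d : nat} {V K : finType}.
Variable X : V -> 'I_d -> R.
Variable vtx : K -> 'I_d.+1 -> V.

Lemma MJ_ge0 (eps : R) (phi : V -> R) (e : K) (k : 'I_d) : 0 <= MJ vtx eps phi e k.
Proof. by rewrite /MJ; case: ifP => _; exact: sqr_ge0. Qed.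

Lemma MJ_bound (eps : R) (phi : V -> R) (e : K) (k : 'I_d) :
  MJ vtx eps phi e k * grad X vtx (fun v => Jeps' eps (phi v)) e k ^+ 2 <= grad X vtx phi e k ^+ 2.
Proof.
rewrite /MJ /grad; case: ifP => [_|/negbFE/eqP ->].
  exact: sq_div_bound.
by rewrite !subrr !mul0r expr0n /= mulr0.
Qed.

Lemma part1 (eta eps dt : R) (phin phi1 mu1 : V -> R) :
  0 < eps -> eps < 1 / 2 -> 0 < dt ->
  scheme_step X vtx eta eps dt phin phi1 mu1 ->
  (intIhJ X vtx eps phi1 - intIhJ X vtx eps phin) / dt
    <= Mgradprod X vtx eps phi1 mu1 mu1 + gradprod X vtx phi1 phi1.
Proof.
move=> ep e12 dt0 [S1 S2].
pose Jp1 := fun v => Jeps' eps (phi1 v).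
have H1 := S1 Jp1.
have L1 : intIhJ X vtx eps phi1 - intIhJ X vtx eps phin
    <= lumped X vtx (fun v => phi1 v - phin v) Jp1.
  rewrite /intIhJ -intIh_sub /lumped; apply: intIh_mono => v.
  by rewrite mulrC; exact: (@Jeps_conv _ eps ep e12 (phin v) (phi1 v)).
have L2 : lumped X vtx (fun v => phi1 v - phin v) Jp1 / dt = - Mgradprod X vtx eps phi1 mu1 Jp1.
  by apply/eqP; rewrite -addr_eq0 H1.
have L3 : - Mgradprod X vtx eps phi1 mu1 Jp1
    <= Mgradprod X vtx eps phi1 mu1 mu1 + gradprod X vtx phi1 phi1.
  rewrite /Mgradprod /gradprod -intOmega_add; try (move=> e; exact: IsPoly_const).
  rewrite -mulN1r -intOmega_scale; last by move=> e; exact: IsPoly_const.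
  apply: intOmega_le; try (move=> e; exact: IsPoly_const).
  move=> e p _; rewrite mulN1r -sumrN -big_split /=; apply: ler_sum => k _.
  apply: key_ineq; first exact: MJ_ge0.
  exact: MJ_bound.
apply: le_trans L3; rewrite -L2.
by apply: ler_wpM2r => //; rewrite invr_ge0 ltW.
Qed.

End Part1.
Section Part2.
Context {R : realType}.

Lemma Fpot_ineq (eta x y : R) :
  Fpot eta x - Fpot eta y <= (Fc' eta x + Fe' eta y) * (x - y).
Proof.
rewrite /Fpot /Fc' /Fe'.
set c := (4 * eta ^+ 2)^-1.
have c0 : 0 <= c by rewrite /c invr_ge0 mulr_ge0 // sqr_ge0.
have -> : x ^+ 2 * (x - 1) ^+ 2 / (4 * eta ^+ 2) - y ^+ 2 * (y - 1) ^+ 2 / (4 * eta ^+ 2)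
   = (x ^+ 2 * (x - 1) ^+ 2 - y ^+ 2 * (y - 1) ^+ 2) * c by rewrite /c; ring.
have -> : ((4 * x ^+ 3 - 6 * x ^+ 2 + 3 * x) / (4 * eta ^+ 2) + - y / (4 * eta ^+ 2)) * (x - y)
   = ((4 * x ^+ 3 - 6 * x ^+ 2 + 3 * x - y) * (x - y)) * c by rewrite /c; ring.
apply: ler_wpM2r => //.
rewrite -subr_ge0.
have -> : (4 * x ^+ 3 - 6 * x ^+ 2 + 3 * x - y) * (x - y) - (x ^+ 2 * (x - 1) ^+ 2 - y ^+ 2 * (y - 1) ^+ 2)
  = (y - x) ^+ 2 * ((y - x + 2 * x - 1) ^+ 2 + x ^+ 2 + (x - 1) ^+ 2) by ring.
apply: mulr_ge0; first exact: sqr_ge0.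
by apply: addr_ge0; [apply: addr_ge0|]; exact: sqr_ge0.
Qed.

Lemma grad_sq_ineq (n : nat) (a b : 'I_n -> R) :
  (\sum_(k < n) a k ^+ 2) / 2 - (\sum_(k < n) b k ^+ 2) / 2 <= \sum_(k < n) a k * (a k - b k).
Proof.
rewrite -subr_ge0.
have -> : \sum_(k < n) a k * (a k - b k) - ((\sum_(k < n) a k ^+ 2) / 2 - (\sum_(k < n) b k ^+ 2) / 2)
   = \sum_(k < n) (a k - b k) ^+ 2 / 2.
  rewrite !mulr_suml -!sumrB; apply: eq_bigr => k _; field.
  by [].
by apply: sumr_ge0 => k _; apply: divr_ge0; [exact: sqr_ge0 | lra].
Qed.

Context {d : nat} {V K : finType}.
Variable X : V -> 'I_d -> R.
Variable vtx : K -> 'I_d.+1 -> V.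

Ltac ispoly := repeat first [ apply: IsPoly_const | apply: IsPoly_loc | apply: IsPoly_add
   | apply: IsPoly_sub | apply: IsPoly_mul | apply: IsPoly_exp | apply: IsPoly_opp ].

Lemma IsPoly_energy (eta : R) (phi : V -> R) (e : K) :
  IsPoly (fun p => (\sum_(k < d) grad X vtx phi e k ^+ 2) / 2 + Fpot eta (loc vtx phi e p)).
Proof. rewrite /Fpot; ispoly. Qed.

Lemma grad_sub (f g : V -> R) e k :
  grad X vtx (fun v => f v - g v) e k = grad X vtx f e k - grad X vtx g e k.
Proof. rewrite /grad; ring. Qed.

Lemma loc_sub (f g : V -> R) e p :
  loc vtx (fun v => f v - g v) e p = loc vtx f e p - loc vtx g e p.
Proof.
have := loc_lin vtx f g 1 (-1) e p; rewrite !mul1r !mulN1r => <-.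
by congr loc; apply: funext => v; ring.
Qed.

Lemma energy_stab (eta eps dt : R) (phin phi1 mu1 : V -> R) : 0 < dt ->
  scheme_step X vtx eta eps dt phin phi1 mu1 ->
  energy X vtx eta phi1 + dt * Mgradprod X vtx eps phi1 mu1 mu1 <= energy X vtx eta phin.
Proof.
move=> dt0 [S1 S2].
pose del := fun v => phi1 v - phin v.
have A := S1 mu1.
have B := S2 del.
have sym : lumped X vtx mu1 del = lumped X vtx del mu1.
  by rewrite /lumped; congr intIh; apply: funext => v; rewrite mulrC.
have A' : lumped X vtx del mu1 = - (dt * Mgradprod X vtx eps phi1 mu1 mu1).
  have : lumped X vtx del mu1 / dt = - Mgradprod X vtx eps phi1 mu1 mu1.
    by apply/eqP; rewrite -addr_eq0 A.
  move=> /(congr1 (fun z => z * dt)); rewrite divfK ?gt_eqF // => ->; ring.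
suff : energy X vtx eta phi1 - energy X vtx eta phin <= lumped X vtx mu1 del.
  rewrite sym A'; lra.
rewrite -B /energy -intOmega_sub; try (move=> e; exact: IsPoly_energy).
rewrite /gradprod -intOmega_add; first last.
- move=> e; rewrite /Fc' /Fe'; ispoly.
- move=> e; exact: IsPoly_const.
apply: intOmega_le.
- move=> e; apply: IsPoly_sub; exact: IsPoly_energy.
- move=> e; apply: IsPoly_add; first exact: IsPoly_const.
  rewrite /Fc' /Fe'; ispoly.
move=> e p _.
rewrite /del loc_sub.
have -> : forall a b c f : R, a + b - (c + f) = (a - c) + (b - f) by move=> *; ring.
apply: lerD; last exact: Fpot_ineq.
rewrite [X in _ <= X](eq_bigr (fun k => grad X vtx phi1 e k * (grad X vtx phi1 e k - grad X vtx phin e k))); last first.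
  by move=> k _; congr (_ * _); exact: grad_sub.
exact: grad_sq_ineq.
Qed.

End Part2.
Section Final.
Context {R : realType} {d : nat} {V K : finType}.
Variable X : V -> 'I_d -> R.
Variable vtx : K -> 'I_d.+1 -> V.

Lemma Fpot_ge0 (eta x : R) : 0 <= Fpot eta x.
Proof.
rewrite /Fpot; apply: divr_ge0; first by apply: mulr_ge0; exact: sqr_ge0.
by apply: mulr_ge0 => //; exact: sqr_ge0.
Qed.

Lemma energy_ge0 (eta : R) (phi : V -> R) : 0 <= energy X vtx eta phi.
Proof.
rewrite -(intOmega0 X vtx); apply: intOmega_le.
- move=> e; exact: IsPoly_const.
- move=> e; exact: IsPoly_energy.
move=> e p _; apply: addr_ge0; last exact: Fpot_ge0.
apply: divr_ge0 => //; apply: sumr_ge0 => k _; exact: sqr_ge0.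
Qed.

Lemma gradprod_le (eta : R) (phi : V -> R) : gradprod X vtx phi phi <= 2 * energy X vtx eta phi.
Proof.
rewrite /energy -intOmega_scale; last by move=> e; exact: IsPoly_energy.
apply: intOmega_le.
- move=> e; exact: IsPoly_const.
- move=> e; apply: IsPoly_mul; [exact: IsPoly_const | exact: IsPoly_energy].
move=> e p _.
have := Fpot_ge0 eta (loc vtx phi e p).
have -> : \sum_(k < d) grad X vtx phi e k * grad X vtx phi e k = \sum_(k < d) grad X vtx phi e k ^+ 2.
  by apply: eq_bigr => k _; rewrite expr2.
move: (\sum_(k < d) _) => s; lra.
Qed.

Lemma Mgp_ge0 (eps : R) (phi mu : V -> R) : 0 <= Mgradprod X vtx eps phi mu mu.
Proof.
rewrite -(intOmega0 X vtx); apply: intOmega_le; try (move=> e; exact: IsPoly_const).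
move=> e p _; apply: sumr_ge0 => k _.
rewrite -mulrA -expr2; apply: mulr_ge0; [exact: MJ_ge0 | exact: sqr_ge0].
Qed.

End Final.

Theorem lemma7 (R : realType) :
  (forall (d : nat) (V K : finType) (X : V -> 'I_d -> R) (vtx : K -> 'I_d.+1 -> V)
          (eta eps dt : R) (phin phi1 mu1 : V -> R),
      (1 <= d <= 3)%N -> structured X vtx ->
      0 < eta -> 0 < eps < 1 / 2 -> 0 < dt ->
      scheme_step X vtx eta eps dt phin phi1 mu1 ->
      (intIhJ X vtx eps phi1 - intIhJ X vtx eps phin) / dt
        <= Mgradprod X vtx eps phi1 mu1 mu1 + gradprod X vtx phi1 phi1)
  /\
  (exists C1 C2 : R -> R -> R,
    forall (d : nat) (V K : finType) (X : V -> 'I_d -> R) (vtx : K -> 'I_d.+1 -> V)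
           (eta eps T : R) (N : nat) (phi mu : nat -> V -> R),
      (1 <= d <= 3)%N -> structured X vtx ->
      0 < eta -> 0 < eps < 1 / 2 -> 0 < T -> (0 < N)%N ->
      (forall n, (n < N)%N ->
         scheme_step X vtx eta eps (T / N%:R) (phi n) (phi n.+1) (mu n.+1)) ->
      forall n, (n < N)%N ->
        intIhJ X vtx eps (phi n.+1)
          <= C1 (energy X vtx eta (phi 0%N)) (intIhJ X vtx eps (phi 0%N))
             + C2 (energy X vtx eta (phi 0%N)) (intIhJ X vtx eps (phi 0%N)) * T).
Proof.
split.
  move=> d V K X vtx eta eps dt phin phi1 mu1 _ _ _ /andP[e0 e12] dt0 S.
  exact: part1 S.
exists (fun E J => J + E), (fun E J => 2 * E).
move=> d V K X vtx eta eps T N phi mu _ _ _ /andP[e0 e12] T0 N0 S n nN.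
set dt := T / N%:R.
have dt0 : 0 < dt by rewrite /dt divr_gt0 // ltr0n.
set E0 := energy X vtx eta (phi 0%N).
set J0 := intIhJ X vtx eps (phi 0%N).
have E0ge := energy_ge0 X vtx eta (phi 0%N).
have inv : forall m, (m <= N)%N ->
   intIhJ X vtx eps (phi m) + energy X vtx eta (phi m) <= J0 + E0 + 2 * (m%:R * dt) * E0
   /\ energy X vtx eta (phi m) <= E0.
  elim => [|m IH1] mN.
    by rewrite mul0r mulr0 mul0r addr0 /J0 /E0; split.
  have mN' : (m < N)%N by [].
  have [IHa IHb] := IH1 (ltnW mN').
  have Sm := S m mN'.
  have P1 := @part1 _ _ _ _ X vtx _ _ _ _ _ _ e0 e12 dt0 Sm.
  have St := @energy_stab _ _ _ _ X vtx _ _ _ _ _ _ dt0 Sm.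
  have G := gradprod_le X vtx eta (phi m.+1).
  have M0 := Mgp_ge0 X vtx eps (phi m.+1) (mu m.+1).
  rewrite ler_pdivrMr // in P1.
  set Jm := intIhJ X vtx eps (phi m) in P1 IHa *.
  set Jm1 := intIhJ X vtx eps (phi m.+1) in P1 *.
  set Em := energy X vtx eta (phi m) in St IHa IHb *.
  set Em1 := energy X vtx eta (phi m.+1) in St G *.
  set M := Mgradprod X vtx eps (phi m.+1) (mu m.+1) (mu m.+1) in P1 St M0 *.
  set Gp := gradprod X vtx (phi m.+1) (phi m.+1) in P1 G *.
  have dM : 0 <= dt * M by rewrite mulr_ge0 // ltW.
  have E1 : Em1 <= E0 by lra.
  have dG : Gp * dt <= 2 * E0 * dt.
    apply: ler_wpM2r; [exact: ltW | lra].
  split; last exact: E1.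
  have e1 : 2 * (m.+1%:R * dt) * E0 = 2 * (m%:R * dt) * E0 + 2 * E0 * dt.
    by rewrite -[m.+1%:R]natr1; ring.
  rewrite e1.
  have : (M + Gp) * dt = dt * M + Gp * dt by ring.
  move=> H; rewrite H in P1.
  lra.
have [H1 _] := inv n.+1 nN.
have := energy_ge0 X vtx eta (phi n.+1).
have : n.+1%:R * dt <= T.
  rewrite /dt mulrCA; apply: ler_piMr; first exact: ltW.
  by rewrite ler_pdivrMr ?ltr0n // mul1r ler_nat.
move=> HT.
have : 2 * (n.+1%:R * dt) * E0 <= 2 * T * E0.
  by apply: ler_wpM2r => //; apply: ler_wpM2l.
lra.
Qed.
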